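(* Let $1\le k\le n$ and let $\mathcal{C}$ be any linear storage code (with any sub-packetization $\alpha\ge 1$ and generator matrix of rank $k\alpha$) on a storage network with node set $\mathcal{N}=\{1,\dots,n\}$ and symmetric round-trip-time function $\tau$. Then for every node $i\in\mathcal{N}$, \[ L_{max}^{(i)}(\mathcal{C}) \ge \lambda_{k-1}^{(i)}, \] and the average latency satisfies \[ L_{avg}(\mathcal{C}) \ge \frac{1}{kn}\sum_{i\in\mathcal{N}}\sum_{j=0}^{k-1}\lambda_{j}^{(i)}. \]
   Context: A storage network consists of $n$ nodes $\mathcal{N}=\{1,\dots,n\}$ and a round-trip-time (RTT) function $\tau:\mathcal{N}\times\mathcal{N}\to\mathbb{R}_{\ge 0}$ with $\tau(i,j)=\tau(j,i)$ and $\tau(i,i)=0$. There are $k\le n$ information files $W_1,\dots,W_k$, each consisting of $\alpha$ sub-packets in a finite field $\mathcal{F}$; node $i$ stores $X_i\in\mathcal{F}^\alpha$. A linear storage code $\mathcal{C}$ is given by a $(k\alpha\times n\alpha)$ matrix $G$ over $\mathcal{F}$ of rank $k\alpha$ with $\underline{X}^T=\underline{W}^T G$, where $\underline{X}$ and $\underline{W}$ are the concatenations of all sub-packets of $X_1,\dots,X_n$ and $W_1,\dots,W_k$. File $W_j$ is decodable from a set $S\subseteq\mathcal{N}$ if there is a function $\varphi$ with $\varphi((X_t)_{t\in S})=W_j$ for all choices of the files. The latency of node $i$ for file $W_j$ is $l_j^{(i)}=\min\{L\ge 0: W_j \text{ is decodable from } \{t\in\mathcal{N}:\tau(t,i)\le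 L\}\}$. The per-node worst-case latency is $L_{max}^{(i)}(\mathcal{C})=\max_{j\in[k]} l_j^{(i)}$ and the average latency is $L_{avg}(\mathcal{C})=\frac{1}{kn}\sum_{i\in\mathcal{N}}\sum_{j\in[k]} l_j^{(i)}$. For node $i$, $\lambda_0^{(i)}\le\lambda_1^{(i)}\le\dots\le\lambda_{n-1}^{(i)}$ denotes the multiset $\{\tau(j,i):j\in\mathcal{N}\}$ sorted in ascending order (so $\lambda_0^{(i)}=0$). *)

(* Defs.v *)
From HB Require Import structures.
From mathcomp Require Import all_boot all_order all_algebra all_field.
From mathcomp Require Import classical_sets reals.
Set Implicit Arguments. Unset Strict Implicit. Unset Printing Implicit Defensive.
Import Order.TTheory GRing.Theory Num.Theory.
Local Open Scope ring_scope.

Section StorageCode.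
Variables (F : finFieldType) (R : realType) (n k alpha : nat).

(* Nodes are 'I_n (node t <-> paper's node t+1), files are 'I_k.
   W : 'rV_(k*alpha) is the concatenation of W_1,...,W_k, sub-packet s of file j
   sitting at position j*alpha + s (= mxvec_index j s); same for X. *)

Definition file (W : 'rV[F]_(k * alpha)) (j : 'I_k) : 'rV[F]_alpha :=
  \row_(s < alpha) W 0 (mxvec_index j s).

Definition stored (G : 'M[F]_(k * alpha, n * alpha)) (W : 'rV[F]_(k * alpha))
    (t : 'I_n) : 'rV[F]_alpha :=
  \row_(s < alpha) (W *m G) 0 (mxvec_index t s).

(* W_j is decodable from S: some function of (X_t)_{t in S} returns W_j for
   all choices of the files.  The tuple (X_t)_{t in S} is encoded as the map
   t |-> X_t for t in S, and 0 for t outside S. *)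
Definition decodable (G : 'M[F]_(k * alpha, n * alpha)) (S : {set 'I_n})
    (j : 'I_k) : Prop :=
  exists phi : ('I_n -> 'rV[F]_alpha) -> 'rV[F]_alpha,
    forall W : 'rV[F]_(k * alpha),
      phi (fun t => if t \in S then stored G W t else 0) = file W j.

(* l_j^(i) = min { L >= 0 : W_j decodable from {t : tau(t,i) <= L} }
   (the minimum exists; we take the infimum, which then coincides with it) *)
Definition latency (tau : 'I_n -> 'I_n -> R) (G : 'M[F]_(k * alpha, n * alpha))
    (i : 'I_n) (j : 'I_k) : R :=
  inf [set L : R | 0 <= L /\ decodable G [set t | tau t i <= L] j].

(* L_max^(i) = max_j l_j^(i)  (latencies are >= 0 and k >= 1) *)
Definition Lmax (tau : 'I_n -> 'I_n -> R) (G : 'M[F]_(k * alpha, n * alpha))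
    (i : 'I_n) : R :=
  \big[Num.max/0]_(j < k) latency tau G i j.

Definition Lavg (tau : 'I_n -> 'I_n -> R) (G : 'M[F]_(k * alpha, n * alpha)) : R :=
  ((k * n)%:R)^-1 * \sum_(i < n) \sum_(j < k) latency tau G i j.

End StorageCode.

Definition lambda (R : realType) (n : nat) (tau : 'I_n -> 'I_n -> R)
    (i : 'I_n) (m : nat) : R :=
  nth 0 (sort (fun x y : R => x <= y) [seq tau t i | t <- enum 'I_n]) m.

(* Main.v *)
Require Import Defs.
From HB Require Import structures.
From mathcomp Require Import all_boot all_order all_algebra all_field.
From mathcomp Require Import classical_sets reals.
From mathcomp Require Import boolp zify.
Import Order.TTheory GRing.Theory Num.Theory.
Local Open Scope ring_scope.

Lemma sorted_count_lt (R : realType) (s : seq R) (m : nat) : sorted (fun x y : R => x <= y) s -> (m < size s)%N ->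
  (count (fun x => (x < nth 0 s m)%R) s <= m)%N.
Proof.
move=> ss ms; set y := nth 0 s m; rewrite -(cat_take_drop m s) count_cat.
have -> : count (fun x => (x < y)%R) (drop m s) = 0%N.
  apply/eqP; rewrite -leqn0 leqNgt -has_count; apply/hasPn => x /(nthP 0) [q].
  rewrite size_drop nth_drop => qs <-; rewrite -leNgt.
  apply: (sorted_leq_nth le_trans lexx) => //; rewrite ?inE /=.
  - by rewrite -ltn_subRL.
  - by rewrite leq_addr.
have := count_size (fun x => (x < y)%R) (take m s); rewrite size_take; case: ifP; lia.
Qed.

Lemma sorted_count_ge (R : realType) (s : seq R) (m : nat) (x : R) : sorted (fun x y : R => x <= y) s -> (m < size s)%N ->
  nth 0 s m < x -> (m.+1 <= count (fun y => (y < x)%R) s)%N.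
Proof.
move=> ss ms lt; rewrite -(cat_take_drop m.+1 s) count_cat.
have : count (fun y => (y < x)%R) (take m.+1 s) = size (take m.+1 s).
  apply/eqP; rewrite -all_count; apply/(all_nthP 0) => q; rewrite size_takel //.
  move=> qm; rewrite nth_take //; apply: le_lt_trans lt.
  apply: (sorted_leq_nth le_trans lexx) => //; rewrite ?inE /=.
  - by apply: leq_trans ms.
move=> ->; rewrite size_takel //; exact: leq_addr.
Qed.

Section Dec.
Variables (F : finFieldType) (n k alpha : nat) (G : 'M[F]_(k * alpha, n * alpha)).

Lemma decodable_mono (S1 S2 : {set 'I_n}) j :
  S1 \subset S2 -> decodable G S1 j -> decodable G S2 j.
Proof.
move=> sub [phi Hphi]; exists (fun x => phi (fun t => if t \in S1 then x t else 0)).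
move=> W; rewrite -Hphi; congr phi; apply: funext => t.
by case: ifP => // tS; rewrite (fintype.subsetP sub t tS).
Qed.

Lemma decodable_full j : \rank G = (k * alpha)%N -> decodable G [set: 'I_n]%SET j.
Proof.
move=> rk; have rf : row_free G by rewrite /row_free rk.
exists (fun x => file ((mxvec (\matrix_(t, s) x t 0 s)) *m pinvmx G) j) => W.
have -> : mxvec (\matrix_(t, s) (if t \in [set: 'I_n]%SET then stored G W t else 0) 0 s) = W *m G.
  apply/rowP => c; case/mxvec_indexP: c => t s.
  by rewrite mxvecE mxE finset.in_setT /stored mxE.
suff -> : W *m G *m pinvmx G = W by [].
apply: (row_free_inj rf); rewrite /= mulmxKpV //; exact: submxMl.
Qed.

Definition mkW (h : {ffun 'I_k -> 'rV[F]_alpha}) : 'rV[F]_(k * alpha) :=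
  mxvec (\matrix_(j, s) h j 0 s).

Lemma file_mkW h j : file (mkW h) j = h j.
Proof. by apply/rowP => s; rewrite !mxE mxvecE mxE. Qed.

Lemma decode_card (S : {set 'I_n}) (J : {set 'I_k}) : (1 <= alpha)%N ->
  (forall j, j \in J -> decodable G S j) -> (#|J| <= #|S|)%N.
Proof.
move=> ha dec.
have [Phi HPhi] : exists Phi : 'I_k -> ('I_n -> 'rV[F]_alpha) -> 'rV[F]_alpha,
    forall j, j \in J -> forall W,
      Phi j (fun t => if t \in S then stored G W t else 0) = file W j.
  pose P := fun (j : 'I_k) (phi : ('I_n -> 'rV[F]_alpha) -> 'rV[F]_alpha) =>
    j \in J -> forall W, phi (fun t => if t \in S then stored G W t else 0) = file W j.
  suff H : forall j, exists phi, P j phi.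
    by have [f Hf] := @boolp.choice _ _ P H; exists f.
  move=> j.
  case: (boolP (j \in J)) => jJ.
    by case: (dec j jJ) => phi Hphi; exists phi => _.
  by exists (fun _ => 0) => jJ'; rewrite jJ' in jJ.
pose enc (h : {ffun 'I_k -> 'rV[F]_alpha}) : {ffun 'I_n -> 'rV[F]_alpha} :=
  [ffun t => if t \in S then stored G (mkW h) t else 0].
pose DJ := pffun_on (0 : 'rV[F]_alpha) J predT.
pose DS := pffun_on (0 : 'rV[F]_alpha) S predT.
have inj : {in DJ &, injective enc}.
  move=> h1 h2 /pffun_onP [s1 _] /pffun_onP [s2 _] E; apply/ffunP => j.
  case: (boolP (j \in J)) => jJ.
    rewrite -(file_mkW h1) -(file_mkW h2) -!HPhi //; congr Phi.
    by apply: funext => t; have := congr1 (fun f : {ffun 'I_n -> 'rV[F]_alpha} => f t) E; rewrite !ffunE.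
  have z1 : h1 j = 0 by apply/eqP; apply: contraNT jJ => nz; apply: (fintype.subsetP s1); rewrite inE.
  have z2 : h2 j = 0 by apply/eqP; apply: contraNT jJ => nz; apply: (fintype.subsetP s2); rewrite inE.
  by rewrite z1 z2.
have sub : enc @: DJ \subset DS.
  apply/fintype.subsetP => _ /imsetP [h _ ->]; apply/pffun_onP; split.
    apply/fintype.subsetP => t; rewrite inE ffunE; case: ifP => // _; by rewrite eqxx.
  by move=> x _.
have := subset_leq_card sub; rewrite (card_in_imset inj) !card_pffun_on.
have gt1 : (1 < #|predT : {pred 'rV[F]_alpha}|)%N.
  rewrite cardT -cardE card_mx mul1n.
  apply: (leq_trans (card_finNzRing_gt1 F)).
  by rewrite -{1}(expn1 #|F|) leq_pexp2l // (leq_trans _ (card_finNzRing_gt1 F)).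
by rewrite leq_exp2l.
Qed.
End Dec.

Lemma card_set_count (T : finType) (P : pred T) :
  #|[set t | P t]| = count P (enum T).
Proof.
rewrite cardE /enum_mem size_filter count_filter; apply: eq_count => t; by rewrite !inE ?andbT.
Qed.

Section Main.
Variables (F : finFieldType) (R : realType) (n k alpha : nat).
Variables (tau : 'I_n -> 'I_n -> R) (G : 'M[F]_(k * alpha, n * alpha)).
Hypothesis halpha : (1 <= alpha)%N.
Hypothesis tau_ge0 : forall i j, 0 <= tau i j.
Hypothesis rankG : \rank G = (k * alpha)%N.

Let ts (i : 'I_n) := [seq tau t i | t <- enum 'I_n].

Lemma sorted_ts i : sorted (fun x y : R => x <= y) (sort (fun x y : R => x <= y) (ts i)).
Proof. exact: (sort_sorted (@le_total _ R)). Qed.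

Lemma size_ts i : size (sort (fun x y : R => x <= y) (ts i)) = n.
Proof. by rewrite size_sort size_map size_enum_ord. Qed.

Lemma card_ball_lt i (m : nat) : (m < n)%N ->
  (#|[set t | (tau t i < lambda tau i m)%R]| <= m)%N.
Proof.
move=> mn; rewrite card_set_count.
have -> : count (fun t => (tau t i < lambda tau i m)%R) (enum 'I_n)
    = count (fun x => (x < lambda tau i m)%R) (sort (fun x y : R => x <= y) (ts i)).
  have hp : perm_eq (sort (fun x y : R => x <= y) (ts i)) (ts i) by rewrite perm_sort.
  by rewrite (permP hp) /ts [RHS]count_map.
rewrite /lambda -/(ts i).
apply: sorted_count_lt; first exact: sorted_ts.
by rewrite size_ts.
Qed.

Lemma latency_nonempty i j :
  ([set L : R | 0 <= L /\ decodable G [set t | tau t i <= L] j] !=set0)%classic.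
Proof.
exists (\sum_t tau t i); split; first by apply: sumr_ge0.
apply: (@decodable_mono F n k alpha G [set: 'I_n]%SET); last exact: decodable_full.
apply/fintype.subsetP => t _; rewrite inE.
by rewrite (bigD1 t) //= lerDl sumr_ge0.
Qed.

Lemma key i (m : nat) : (m < n)%N ->
  (#|[set j | (latency tau G i j < lambda tau i m)%R]| <= m)%N.
Proof.
move=> mn; apply: (leq_trans _ (card_ball_lt i m mn)).
apply: (@decode_card F n k alpha G) => // j; rewrite inE => lt.
set A := ([set L : R | 0 <= L /\ decodable G [set t | tau t i <= L] j])%classic.
have hA : has_inf A.
  split; first exact: latency_nonempty.
  by exists 0 => y [].
have [e [e0 de] elt] := inf_adherent (eps := lambda tau i m - latency tau G i j)
  (ltac:(by rewrite subr_gt0)) hA.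
apply: (@decodable_mono F n k alpha G _ _ j _ de); apply/fintype.subsetP => t; rewrite !inE => le.
apply: le_lt_trans le _; move: elt; rewrite /latency -/A.
by rewrite addrC subrK.
Qed.

End Main.

Theorem proposition1 (F : finFieldType) (R : realType) (n k alpha : nat)
    (hk1 : (1 <= k)%N) (hkn : (k <= n)%N) (halpha : (1 <= alpha)%N)
    (tau : 'I_n -> 'I_n -> R)
    (tau_ge0 : forall i j, 0 <= tau i j)
    (tau_sym : forall i j, tau i j = tau j i)
    (tau_diag : forall i, tau i i = 0)
    (G : 'M[F]_(k * alpha, n * alpha))
    (rankG : \rank G = (k * alpha)%N) :
  (forall i : 'I_n, lambda tau i k.-1 <= Lmax tau G i) /\
  ((k * n)%:R)^-1 * \sum_(i < n) \sum_(j < k) lambda tau i j <= Lavg tau G.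
Proof.
have K := @key F R n k alpha tau G halpha tau_ge0 rankG.
split.
  move=> i; rewrite leNgt; apply/negP => H.
  have E : [set j | (latency tau G i j < lambda tau i k.-1)%R] = [set: 'I_k]%SET.
    apply/setP => j; rewrite !inE; apply: le_lt_trans H.
    by rewrite /Lmax (bigD1 j) //= le_max lexx.
  have := K i k.-1 ltac:(lia); rewrite E cardsT card_ord; lia.
rewrite /Lavg; apply: ler_wpM2l; first by rewrite invr_ge0 ler0n.
apply: ler_sum => i _.
set s := [seq latency tau G i j | j <- enum 'I_k].
set ls := sort (fun x y : R => x <= y) s.
have hp : perm_eq ls s by rewrite perm_sort.
have sz : size ls = k by rewrite size_sort size_map size_enum_ord.
have -> : \sum_(j < k) latency tau G i j = \sum_(m < k) nth 0 ls m.
  transitivity (\sum_(0 <= m < size ls) nth 0 ls m); last by rewrite sz big_mkord.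
  rewrite [RHS](_ : _ = \sum_(x <- ls) x); last by rewrite [RHS](big_nth 0).
  rewrite (perm_big _ hp) /s big_map big_enum //.
apply: ler_sum => m _; rewrite leNgt; apply/negP => H.
have := @sorted_count_ge R ls m (lambda tau i m) (sort_sorted (@le_total _ R) s) (ltac:(by rewrite sz)) H.
rewrite (permP hp) /s count_map.
have := K i m (leq_trans (ltn_ord m) hkn); rewrite card_set_count.
move=> h1 h2; have := leq_trans h2 h1; by rewrite ltnn.
Qed.
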